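(* For each natural number $N$ there exists $d_N>0$ such that for every complex $x$ with $|x|\ge d_N$ there exists $\theta\in\mathbb{C}$ with $|\theta|\le1$ such that \[ \log\Bigl(1-\sum_{n=1}^N\frac{n!}{x^n}\Bigr)^{-1}=\sum_{n=1}^N\frac{a_n}{n}\frac{1}{x^n}+\theta\,\frac{a_{N+1}}{N+1}\frac{1}{x^{N+1}}. \]
   Context: $\log$ denotes the principal branch of the logarithm. The integers $a_n$ are defined by $a_1=1$ and $a_n=n\cdot n!+\sum_{k=1}^{n-1}k!\,a_{n-k}$ for $n\ge2$; equivalently, as formal power series in $1/x$, $\log\bigl(1-\sum_{n\ge1}n!\,x^{-n}\bigr)^{-1}=\sum_{n\ge1}\frac{a_n}{n}x^{-n}$. *)

(* Defs.v *)
From Stdlib Require Import Reals Arith List.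
From Coquelicot Require Import Coquelicot.
Open Scope R_scope.

(* Principal argument in (-PI, PI] of a nonzero complex number
   (value 0 at z = 0, irrelevant here). *)
Definition Carg (z : C) : R :=
  if Rle_dec 0 (Im z) then acos (Re z / Cmod z) else - acos (Re z / Cmod z).

Definition Clog (z : C) : C := (ln (Cmod z), Carg z).

Fixpoint nsum1 (f : nat -> nat) (m : nat) : nat :=
  match m with O => O | S p => (nsum1 f p + f (S p))%nat end.

(* aux m j = a_j for 1 <= j <= m (and 0 for j = 0). *)
Fixpoint aux (m : nat) : nat -> nat :=
  match m with
  | O => fun _ => O
  | S p => let f := aux p in
      fun j => if (j <=? p)%nat then f j
               else if (j =? 1)%nat then 1%nat
               else (j * fact j + nsum1 (fun k => fact k * f (j - k)%nat) (j - 1))%nat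
  end.

(* a_1 = 1, a_n = n*n! + sum_{k=1}^{n-1} k! a_{n-k} for n >= 2 (a_0 := 0, unused). *)
Definition a (n : nat) : nat := aux n n.

(* Main.v *)
Require Import Defs.
From Stdlib Require Import Reals Arith Lia Lra.
From Coquelicot Require Import Coquelicot.
Open Scope R_scope.

Lemma aux_stable : forall m j, (j <= m)%nat -> aux m j = aux j j.
Proof.
  induction m as [|p IH]; intros j Hj.
  - assert (j = 0%nat) by lia; subst; reflexivity.
  - destruct (Nat.eq_dec j (S p)) as [->|Hne]; [reflexivity|].
    simpl. replace (j <=? p)%nat with true by (symmetry; apply Nat.leb_le; lia).
    apply IH; lia.
Qed.

Lemma aux_S : forall p j, aux (S p) j = if (j <=? p)%nat then aux p j else if (j =? 1)%nat then 1%nat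
   else (j * fact j + nsum1 (fun k => fact k * aux p (j - k)%nat) (j - 1))%nat.
Proof. reflexivity. Qed.

Lemma nsum1_ext : forall f g m, (forall k, (1 <= k <= m)%nat -> f k = g k) -> nsum1 f m = nsum1 g m.
Proof.
  induction m; intros H; simpl; [reflexivity|].
  rewrite IHm by (intros; apply H; lia). rewrite H by lia. reflexivity.
Qed.

Lemma nsum1_R : forall f m, INR (nsum1 f m) = sum_n_m (fun k => INR (f k)) 1 m.
Proof.
  induction m; simpl.
  - rewrite sum_n_m_zero by lia. reflexivity.
  - rewrite plus_INR, IHm, sum_n_Sm by lia. reflexivity.
Qed.

Lemma a_rec : forall n, (1 <= n)%nat ->
  INR (a n) = INR n * INR (fact n) + sum_n_m (fun k => INR (fact k) * INR (a (n - k))) 1 (n - 1).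
Proof.
  intros n Hn. destruct n as [|p]; [lia|].
  destruct p as [|p].
  - simpl. rewrite sum_n_m_zero by lia. simpl. unfold zero; simpl. ring.
  - unfold a at 1. rewrite aux_S.
    replace (S (S p) <=? S p)%nat with false by (symmetry; apply Nat.leb_gt; lia).
    replace (S (S p) =? 1)%nat with false by (symmetry; apply Nat.eqb_neq; lia).
    rewrite plus_INR, mult_INR, nsum1_R.
    replace (S (S p) - 1)%nat with (S p) by lia.
    f_equal.
    apply sum_n_m_ext_loc. intros k Hk. rewrite mult_INR.
    unfold a. rewrite (aux_stable (S p) (S (S p) - k)) by lia. reflexivity.
Qed.

Lemma sum_nonneg : forall f n m, (forall k, (n <= k <= m)%nat -> 0 <= f k) -> 0 <= sum_n_m f n m.
Proof.
  intros f n m H. destruct (le_lt_dec n m) as [Hl|Hl].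
  - induction Hl.
    + rewrite sum_n_n. apply H; lia.
    + rewrite sum_n_Sm by lia. unfold plus; simpl. apply Rplus_le_le_0_compat.
      apply IHHl; intros; apply H; lia. apply H; lia.
  - rewrite sum_n_m_zero by lia. unfold zero; simpl; lra.
Qed.

Lemma a_ge : forall n, (1 <= n)%nat -> INR n * INR (fact n) <= INR (a n).
Proof.
  intros n Hn. rewrite a_rec by lia.
  assert (0 <= sum_n_m (fun k => INR (fact k) * INR (a (n - k))) 1 (n - 1)).
  { apply sum_nonneg. intros. apply Rmult_le_pos; apply pos_INR. }
  lra.
Qed.
Lemma sum_morph {G H : AbelianMonoid} (h : G -> H) :
  h zero = zero -> (forall x y, h (plus x y) = plus (h x) (h y)) ->
  forall f n m, h (sum_n_m f n m) = sum_n_m (fun k => h (f k)) n m.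
Proof.
  intros h0 hp f n m. revert n. induction m; intros n.
  - destruct n. rewrite !sum_n_n. reflexivity.
    rewrite !sum_n_m_zero by lia. exact h0.
  - destruct (le_lt_dec n (S m)).
    + rewrite !sum_n_Sm by lia. rewrite hp, IHm. reflexivity.
    + rewrite !sum_n_m_zero by lia. exact h0.
Qed.

Lemma RtoC_sum : forall f n m, RtoC (sum_n_m f n m) = sum_n_m (fun k => RtoC (f k)) n m.
Proof.
  intros. apply (sum_morph (G:=R_AbelianMonoid) (H:=C_AbelianMonoid) RtoC).
  reflexivity. intros; unfold plus; simpl. unfold RtoC, Cplus; simpl. f_equal; ring.
Qed.

Lemma Re_sum : forall f n m, Re (sum_n_m f n m) = sum_n_m (fun k => Re (f k)) n m.
Proof.
  intros. apply (sum_morph (G:=C_AbelianMonoid) (H:=R_AbelianMonoid) Re).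
  reflexivity. intros; reflexivity.
Qed.

Lemma Im_sum : forall f n m, Im (sum_n_m f n m) = sum_n_m (fun k => Im (f k)) n m.
Proof.
  intros. apply (sum_morph (G:=C_AbelianMonoid) (H:=R_AbelianMonoid) Im).
  reflexivity. intros; reflexivity.
Qed.

Lemma Cmod_sum : forall (f : nat -> C) n m, Cmod (sum_n_m f n m) <= sum_n_m (fun k => Cmod (f k)) n m.
Proof.
  intros f n m. revert n. induction m; intros n.
  - destruct n. rewrite !sum_n_n. lra.
    rewrite !sum_n_m_zero by lia. unfold zero; simpl. rewrite Cmod_0. lra.
  - destruct (le_lt_dec n (S m)).
    + rewrite !sum_n_Sm by lia. unfold plus; simpl.
      eapply Rle_trans. apply Cmod_triangle. specialize (IHm n). lra.
    + rewrite !sum_n_m_zero by lia. unfold zero; simpl. rewrite Cmod_0. lra.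
Qed.

Lemma Rsum_le : forall (f g : nat -> R) n m, (forall k, (n <= k <= m)%nat -> f k <= g k) ->
  sum_n_m f n m <= sum_n_m g n m.
Proof.
  intros f g n m H. revert n H. induction m; intros n H.
  - destruct n. rewrite !sum_n_n. apply H; lia.
    rewrite !sum_n_m_zero by lia. lra.
  - destruct (le_lt_dec n (S m)).
    + rewrite !sum_n_Sm by lia. unfold plus; simpl.
      assert (sum_n_m f n m <= sum_n_m g n m) by (apply IHm; intros; apply H; lia).
      assert (f (S m) <= g (S m)) by (apply H; lia). lra.
    + rewrite !sum_n_m_zero by lia. lra.
Qed.

Lemma Csum_Sm : forall (f : nat -> C) n m, (n <= S m)%nat -> sum_n_m f n (S m) = (sum_n_m f n m + f (S m))%C.
Proof. intros. rewrite sum_n_Sm by auto. reflexivity. Qed.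

Lemma Csum_plus : forall (f g : nat -> C) n m, sum_n_m (fun k => f k + g k)%C n m = (sum_n_m f n m + sum_n_m g n m)%C.
Proof. intros. exact (sum_n_m_plus (G:=C_AbelianMonoid) f g n m). Qed.

Lemma Csum_mult_l : forall (c : C) (f : nat -> C) n m, (c * sum_n_m f n m)%C = sum_n_m (fun k => c * f k)%C n m.
Proof. intros. symmetry. apply (sum_n_m_mult_l (K:=C_Ring)). Qed.

Lemma Csum_mult_r : forall (c : C) (f : nat -> C) n m, (sum_n_m f n m * c)%C = sum_n_m (fun k => f k * c)%C n m.
Proof. intros. symmetry. apply (sum_n_m_mult_r (K:=C_Ring)). Qed.

Lemma Csum_zero : forall (f : nat -> C) n m, (m < n)%nat -> sum_n_m f n m = RtoC 0.
Proof. intros. rewrite sum_n_m_zero by auto. reflexivity. Qed.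

Lemma Csum_ext : forall (f g : nat -> C) n m, (forall k, (n <= k <= m)%nat -> f k = g k) -> sum_n_m f n m = sum_n_m g n m.
Proof. intros. apply sum_n_m_ext_loc; auto. Qed.

Lemma tri_swap : forall (f : nat -> nat -> C) N,
  sum_n_m (fun k => sum_n_m (fun m => f k m) 1 (N - k)) 1 N =
  sum_n_m (fun n => sum_n_m (fun k => f k (n - k)%nat) 1 (n - 1)) 1 N.
Proof.
  intros f N. induction N.
  - rewrite !Csum_zero by lia. reflexivity.
  - rewrite !(Csum_Sm _ 1 N) by lia.
    rewrite <- IHN.
    replace (S N - S N)%nat with 0%nat by lia. rewrite (Csum_zero _ 1 0) by lia.
    replace (S N - 1)%nat with N by lia.
    rewrite (Csum_ext (fun k => sum_n_m (fun m => f k m) 1 (S N - k))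
       (fun k => sum_n_m (fun m => f k m) 1 (N - k) + f k (S N - k)%nat)%C).
    2:{ intros k Hk. replace (S N - k)%nat with (S (N - k)) by lia. apply Csum_Sm. lia. }
    rewrite Csum_plus. apply Cplus_0_r.
Qed.

Open Scope C_scope.
Definition Pz N z := sum_n_m (fun n => RtoC (INR (fact n)) * Cpow z n) 1 N.
Definition dPz N z := sum_n_m (fun n => RtoC (INR n * INR (fact n)) * Cpow z (n-1)) 1 N.
Definition dGz N z := sum_n_m (fun n => RtoC (INR (a n)) * Cpow z (n-1)) 1 N.
Definition qN N : R := sum_n_m (fun k => INR (fact k) * INR (a (S N - k)))%R 1 N.
Definition CN N : R := sum_n_m (fun k => sum_n_m (fun m => INR (fact k) * INR (a m))%R (S (S N) - k) N) 1 N.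
Definition ff z k m := RtoC (INR (fact k) * INR (a m))%R * Cpow z (k + m - 1).

Lemma PdG : forall N z, Pz N z * dGz N z = sum_n_m (fun k => sum_n_m (fun m => ff z k m) 1 N) 1 N.
Proof.
  intros. unfold Pz. rewrite Csum_mult_r. apply Csum_ext; intros k Hk.
  unfold dGz. rewrite Csum_mult_l. apply Csum_ext; intros m Hm. unfold ff.
  replace (k + m - 1)%nat with (k + (m - 1))%nat by lia.
  rewrite Cpow_add_r, RtoC_mult. ring.
Qed.

Lemma L_eq : forall N z, dPz N z + sum_n_m (fun k => sum_n_m (fun m => ff z k m) 1 (N - k)) 1 N = dGz N z.
Proof.
  intros. rewrite tri_swap. unfold dPz. rewrite <- Csum_plus. unfold dGz.
  apply Csum_ext; intros n Hn.
  rewrite (Csum_ext _ (fun k => RtoC (INR (fact k) * INR (a (n - k))) * Cpow z (n - 1))).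
  2:{ intros k Hk. unfold ff. replace (k + (n - k) - 1)%nat with (n - 1)%nat by lia. reflexivity. }
  rewrite <- Csum_mult_r, <- RtoC_sum, <- Cmult_plus_distr_r, <- RtoC_plus.
  rewrite (a_rec n) by lia. reflexivity.
Qed.

Lemma Rsum_mult_r : forall (c : R) (f : nat -> R) n m, sum_n_m (fun k => f k * c)%R n m = (sum_n_m f n m * c)%R.
Proof. intros. exact (sum_n_m_mult_r (K:=R_Ring) c f n m). Qed.

Lemma pow_le_dec : forall x n m, (0 <= x <= 1)%R -> (n <= m)%nat -> (x ^ m <= x ^ n)%R.
Proof.
  intros x n m Hx Hnm. induction Hnm. lra.
  simpl. assert (0 <= x ^ m)%R by (apply pow_le; lra).
  assert (x * x ^ m <= 1 * x ^ m)%R by (apply Rmult_le_compat_r; lra). lra.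
Qed.

Lemma ealg : forall N z, (Cmod z <= 1)%R ->
  (Cmod (dPz N z - (1 - Pz N z) * dGz N z - RtoC (qN N) * Cpow z N) <= CN N * Cmod z ^ (S N))%R.
Proof.
  intros N z Hz.
  set (T := sum_n_m (fun k => sum_n_m (fun m => ff z k m) (S (S N) - k) N) 1 N).
  assert (Hs : Pz N z * dGz N z = sum_n_m (fun k => sum_n_m (fun m => ff z k m) 1 (N - k)) 1 N
                 + RtoC (qN N) * Cpow z N + T).
  { rewrite PdG.
    rewrite (Csum_ext _ (fun k => sum_n_m (fun m => ff z k m) 1 (N - k) +
        (RtoC (INR (fact k) * INR (a (S N - k))) * Cpow z N + sum_n_m (fun m => ff z k m) (S (S N) - k) N))).
    2:{ intros k Hk.
        rewrite (sum_n_m_Chasles _ 1 (N - k) N) by lia.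
        rewrite (sum_n_m_Chasles _ (S (N - k)) (S (N - k)) N) by lia.
        rewrite sum_n_n. unfold ff at 2.
        replace (k + S (N - k) - 1)%nat with N by lia.
        replace (S (N - k)) with (S N - k)%nat by lia.
        replace (S (S N - k)) with (S (S N) - k)%nat by lia. reflexivity. }
    rewrite !Csum_plus. unfold qN. rewrite RtoC_sum, Csum_mult_r. unfold T. ring. }
  assert (E : dPz N z - (1 - Pz N z) * dGz N z - RtoC (qN N) * Cpow z N = T).
  { replace ((1 - Pz N z) * dGz N z) with (dGz N z - Pz N z * dGz N z) by ring.
    rewrite Hs, <- (L_eq N z). ring. }
  rewrite E. unfold T.
  eapply Rle_trans. apply Cmod_sum.
  eapply Rle_trans. apply Rsum_le. intros k Hk. apply Cmod_sum.
  unfold CN. rewrite <- Rsum_mult_r. apply Rsum_le. intros k Hk.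
  rewrite <- Rsum_mult_r. apply Rsum_le. intros m Hm.
  unfold ff. rewrite Cmod_mult, Cmod_R, Cmod_pow.
  rewrite Rabs_pos_eq by (apply Rmult_le_pos; apply pos_INR).
  apply Rmult_le_compat_l. apply Rmult_le_pos; apply pos_INR.
  apply pow_le_dec. split; [apply Cmod_ge_0|exact Hz]. lia.
Qed.

Open Scope R_scope.

Lemma is_derive_eq : forall (f : R -> R) x l l', is_derive f x l -> l = l' -> is_derive f x l'.
Proof. intros; subst; auto. Qed.

Lemma rp_deriv : forall (c : nat -> R) N t,
  is_derive (fun t => sum_n_m (fun n => c n * t ^ n) 1 N) t (sum_n_m (fun n => c n * INR n * t ^ (n - 1)) 1 N).
Proof.
  intros c N t. induction N.
  - apply (is_derive_ext (fun _ => 0)). intros s. rewrite sum_n_m_zero. reflexivity. lia.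
    rewrite sum_n_m_zero by lia. exact (is_derive_const (K:=R_AbsRing) (V:=R_NormedModule) 0 t).
  - apply (is_derive_ext (fun s => plus (sum_n_m (fun n => c n * s ^ n) 1 N) (c (S N) * s ^ S N))).
    intros s. rewrite sum_n_Sm. reflexivity. lia.
    rewrite sum_n_Sm by lia.
    apply (is_derive_plus (fun s => sum_n_m (fun n => c n * s ^ n) 1 N) (fun s => c (S N) * s ^ S N)).
    exact IHN.
    eapply is_derive_eq. apply is_derive_scal. apply is_derive_pow. apply is_derive_id.
    simpl. replace (N - 0)%nat with N by lia. unfold one; simpl. ring.
Qed.

Ltac rring := match goal with |- ?a = ?b => change (@eq R a b); ring end.
Open Scope C_scope.
Definition CP (c : nat -> R) N z := sum_n_m (fun n => RtoC (c n) * Cpow z n) 1 N.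
Definition CdP (c : nat -> R) N z := sum_n_m (fun n => RtoC (c n * INR n) * Cpow z (n - 1)) 1 N.

Lemma Re_CP : forall c N t u, Re (CP c N (RtoC t * u)) = sum_n_m (fun n => (c n * Re (Cpow u n)) * t ^ n)%R 1 N.
Proof.
  intros. unfold CP. rewrite Re_sum. apply sum_n_m_ext_loc. intros n Hn.
  rewrite Cpow_mult_l, <- RtoC_pow, Cmult_assoc, <- RtoC_mult, re_scal_l. rring.
Qed.
Lemma Im_CP : forall c N t u, Im (CP c N (RtoC t * u)) = sum_n_m (fun n => (c n * Im (Cpow u n)) * t ^ n)%R 1 N.
Proof.
  intros. unfold CP. rewrite Im_sum. apply sum_n_m_ext_loc. intros n Hn.
  rewrite Cpow_mult_l, <- RtoC_pow, Cmult_assoc, <- RtoC_mult, im_scal_l. rring.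
Qed.

Lemma dterm : forall (c : nat -> R) n t u, (1 <= n)%nat ->
  u * (RtoC (c n * INR n) * Cpow (RtoC t * u) (n - 1)) = RtoC (c n * INR n * t ^ (n - 1)) * Cpow u n.
Proof.
  intros c n t u Hn. destruct n as [|n]; [lia|]. replace (S n - 1)%nat with n by lia.
  rewrite Cpow_S, Cpow_mult_l, <- RtoC_pow. rewrite !RtoC_mult. ring.
Qed.

Lemma Re_CdP : forall c N t u, Re (u * CdP c N (RtoC t * u)) = sum_n_m (fun n => (c n * Re (Cpow u n)) * INR n * t ^ (n - 1))%R 1 N.
Proof.
  intros. unfold CdP. rewrite Csum_mult_l, Re_sum. apply sum_n_m_ext_loc. intros n Hn.
  rewrite dterm by lia. rewrite re_scal_l. rring.
Qed.
Lemma Im_CdP : forall c N t u, Im (u * CdP c N (RtoC t * u)) = sum_n_m (fun n => (c n * Im (Cpow u n)) * INR n * t ^ (n - 1))%R 1 N.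
Proof.
  intros. unfold CdP. rewrite Csum_mult_l, Im_sum. apply sum_n_m_ext_loc. intros n Hn.
  rewrite dterm by lia. rewrite im_scal_l. rring.
Qed.

Lemma dRe_CP : forall c N u t, is_derive (fun t => Re (CP c N (RtoC t * u))) t (Re (u * CdP c N (RtoC t * u))).
Proof.
  intros. apply (is_derive_ext (fun s => sum_n_m (fun n => (c n * Re (Cpow u n)) * s ^ n)%R 1 N)).
  intros s. rewrite Re_CP. reflexivity.
  rewrite Re_CdP. apply rp_deriv.
Qed.
Lemma dIm_CP : forall c N u t, is_derive (fun t => Im (CP c N (RtoC t * u))) t (Im (u * CdP c N (RtoC t * u))).
Proof.
  intros. apply (is_derive_ext (fun s => sum_n_m (fun n => (c n * Im (Cpow u n)) * s ^ n)%R 1 N)).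
  intros s. rewrite Im_CP. reflexivity.
  rewrite Im_CdP. apply rp_deriv.
Qed.

Open Scope R_scope.

Ltac reqR := match goal with |- ?a = ?b => change (@eq R a b) end.

Lemma d_plus : forall (f g : R -> R) (x a b : R), is_derive f x a -> is_derive g x b -> is_derive (fun s => f s + g s) x (a + b).
Proof. intros. exact (is_derive_plus f g x a b H H0). Qed.
Lemma d_minus : forall (f g : R -> R) (x a b : R), is_derive f x a -> is_derive g x b -> is_derive (fun s => f s - g s) x (a - b).
Proof. intros. exact (is_derive_minus f g x a b H H0). Qed.
Lemma d_opp : forall (f : R -> R) (x a : R), is_derive f x a -> is_derive (fun s => - f s) x (- a).
Proof. intros. exact (is_derive_opp f x a H). Qed.
Lemma d_scal : forall (f : R -> R) (x k a : R), is_derive f x a -> is_derive (fun s => k * f s) x (k * a).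
Proof. intros. apply is_derive_scal; auto. Qed.
Lemma d_pow2 : forall (f : R -> R) (x a : R), is_derive f x a -> is_derive (fun s => f s ^ 2) x (2 * f x * a).
Proof. intros. eapply is_derive_eq. apply is_derive_pow. eauto. simpl. ring. Qed.
Lemma d_ln : forall (f : R -> R) (x a : R), is_derive f x a -> 0 < f x -> is_derive (fun s => ln (f s)) x (a / f x).
Proof.
  intros. eapply is_derive_eq. apply (is_derive_comp ln f). apply is_derive_ln; auto. eauto.
  unfold scal; simpl; unfold mult; simpl. unfold Rdiv. ring.
Qed.
Lemma d_atan : forall (f : R -> R) (x a : R), is_derive f x a -> is_derive (fun s => atan (f s)) x (a / (1 + f x ^ 2)).
Proof.
  intros. eapply is_derive_eq. apply (is_derive_comp atan f). apply is_derive_atan. eauto.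
  unfold scal; simpl; unfold mult; simpl. unfold Rdiv, Rsqr. simpl. rewrite Rmult_1_r. reflexivity.
Qed.

Lemma d_logparts : forall (X Y : R -> R) (t X' Y' : R), is_derive X t X' -> is_derive Y t Y' -> 0 < X t ->
  is_derive (fun s => - ln (X s ^ 2 + Y s ^ 2) / 2) t (- (X t * X' + Y t * Y') / (X t ^ 2 + Y t ^ 2)) /\
  is_derive (fun s => - atan (Y s / X s)) t (- (X t * Y' - Y t * X') / (X t ^ 2 + Y t ^ 2)).
Proof.
  intros X Y t X' Y' HX HY Hp.
  assert (Hs : 0 < X t ^ 2 + Y t ^ 2) by nra.
  split.
  - eapply is_derive_ext. intros s. unfold Rdiv. rewrite Rmult_comm. reflexivity.
    eapply is_derive_eq. apply d_scal. apply d_opp. apply d_ln. apply d_plus; apply d_pow2; eauto. auto.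
    cbv beta. reqR. field. lra.
  - eapply is_derive_eq. apply d_opp. apply d_atan. apply is_derive_div; eauto. lra.
    cbv beta. reqR. field. split; lra.
Qed.

Open Scope C_scope.
Definition fc (n : nat) : R := INR (fact n).
Definition gc (n : nat) : R := (INR (a n) / INR n)%R.
Definition Wf N u t : C := RtoC 1 - CP fc N (RtoC t * u).
Definition F1 N u t : R := (- ln (Re (Wf N u t) ^ 2 + Im (Wf N u t) ^ 2) / 2 - Re (CP gc N (RtoC t * u)))%R.
Definition F2 N u t : R := (- atan (Im (Wf N u t) / Re (Wf N u t)) - Im (CP gc N (RtoC t * u)))%R.
Definition Dv N u t : C := (u * CdP fc N (RtoC t * u)) / Wf N u t - u * CdP gc N (RtoC t * u).

Lemma val_Re : forall W p q : C, (0 < Re W)%R ->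
  Re (p / W - q) = (- (Re W * (- Re p) + Im W * (- Im p)) / (Re W ^ 2 + Im W ^ 2) - Re q)%R.
Proof.
  intros [x y] [p1 p2] [q1 q2] H. simpl in H.
  assert (0 < x ^ 2 + y ^ 2)%R by nra.
  unfold Cdiv, Cminus, Cinv, Cmult, Cplus, Copp, Re, Im; simpl. field. lra.
Qed.
Lemma val_Im : forall W p q : C, (0 < Re W)%R ->
  Im (p / W - q) = (- (Re W * (- Im p) - Im W * (- Re p)) / (Re W ^ 2 + Im W ^ 2) - Im q)%R.
Proof.
  intros [x y] [p1 p2] [q1 q2] H. simpl in H.
  assert (0 < x ^ 2 + y ^ 2)%R by nra.
  unfold Cdiv, Cminus, Cinv, Cmult, Cplus, Copp, Re, Im; simpl. field. lra.
Qed.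

Lemma dX : forall N u t, is_derive (fun s => Re (Wf N u s)) t (- Re (u * CdP fc N (RtoC t * u)))%R.
Proof.
  intros. apply (is_derive_ext (fun s => 1 - Re (CP fc N (RtoC s * u)))%R).
  intros s. unfold Wf, Cminus, Cplus, Copp, Re; simpl. ring.
  eapply is_derive_eq. apply d_minus. apply (is_derive_const (K:=R_AbsRing) (V:=R_NormedModule) 1%R t).
  apply dRe_CP. unfold zero; simpl. ring.
Qed.
Lemma dY : forall N u t, is_derive (fun s => Im (Wf N u s)) t (- Im (u * CdP fc N (RtoC t * u)))%R.
Proof.
  intros. apply (is_derive_ext (fun s => 0 - Im (CP fc N (RtoC s * u)))%R).
  intros s. unfold Wf, Cminus, Cplus, Copp, Im; simpl. ring.
  eapply is_derive_eq. apply d_minus. apply (is_derive_const (K:=R_AbsRing) (V:=R_NormedModule) 0%R t).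
  apply dIm_CP. unfold zero; simpl. ring.
Qed.

Lemma dF : forall N u t, (0 < Re (Wf N u t))%R ->
  is_derive (F1 N u) t (Re (Dv N u t)) /\ is_derive (F2 N u) t (Im (Dv N u t)).
Proof.
  intros N u t Hp.
  destruct (d_logparts (fun s => Re (Wf N u s)) (fun s => Im (Wf N u s)) t _ _ (dX N u t) (dY N u t) Hp) as [H1 H2].
  unfold Dv. rewrite val_Re, val_Im by exact Hp.
  split.
  - eapply is_derive_eq. apply d_minus. exact H1. apply dRe_CP. unfold Wf. reqR. ring.
  - eapply is_derive_eq. apply d_minus. exact H2. apply dIm_CP. unfold Wf. reqR. ring.
Qed.

Definition D0 N : R := sum_n_m fc 1 N.
Definition AA N : R := INR (a (S N)).
Definition rr N : R := (1 / (1 + CN N + AA N * D0 N))%R.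

Lemma CP_bound : forall N z, (Cmod z <= 1)%R -> (Cmod (CP fc N z) <= D0 N * Cmod z)%R.
Proof.
  intros N z Hz. unfold CP, D0. eapply Rle_trans. apply Cmod_sum.
  rewrite <- Rsum_mult_r. apply Rsum_le. intros n Hn.
  rewrite Cmod_mult, Cmod_R, Cmod_pow. unfold fc.
  rewrite Rabs_pos_eq by apply pos_INR.
  apply Rmult_le_compat_l. apply pos_INR.
  rewrite <- (pow_1 (Cmod z)) at 2. apply pow_le_dec. split; [apply Cmod_ge_0|lra]. lia.
Qed.

Lemma dPz_eq : forall N z, CdP fc N z = dPz N z.
Proof. intros. unfold CdP, dPz, fc. apply Csum_ext. intros n Hn. rewrite (Rmult_comm (INR (fact n))). reflexivity. Qed.

Lemma dGz_eq : forall N z, CdP gc N z = dGz N z.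
Proof.
  intros. unfold CdP, dGz, gc. apply Csum_ext. intros n Hn. f_equal. f_equal.
  field. apply not_0_INR. lia.
Qed.

Lemma sumpos_CN : forall N, (0 <= CN N)%R.
Proof. intros. unfold CN. apply sum_nonneg. intros. apply sum_nonneg. intros. apply Rmult_le_pos; apply pos_INR. Qed.
Lemma sumpos_D0 : forall N, (0 <= D0 N)%R.
Proof. intros. unfold D0. apply sum_nonneg. intros. unfold fc. apply pos_INR. Qed.
Lemma sumpos_qN : forall N, (0 <= qN N)%R.
Proof. intros. unfold qN. apply sum_nonneg. intros. apply Rmult_le_pos; apply pos_INR. Qed.

Lemma qN_le : forall N, (qN N + 1 <= AA N)%R.
Proof.
  intros. unfold AA. rewrite a_rec by lia. replace (S N - 1)%nat with N by lia. unfold qN.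
  assert (1 <= INR (S N))%R by (apply (le_INR 1); lia).
  assert (1 <= INR (fact (S N)))%R by (apply (le_INR 1); apply lt_O_fact).
  nra.
Qed.

Lemma AA_ge1 : forall N, (1 <= AA N)%R.
Proof. intros. pose proof (qN_le N). pose proof (sumpos_qN N). lra. Qed.

Lemma Dv_bound : forall N u t, (0 <= t <= 1)%R -> (Cmod u <= rr N)%R ->
  (0 < Re (Wf N u t))%R /\ (Cmod (Dv N u t) <= AA N * Cmod u ^ S N * t ^ N)%R.
Proof.
  intros N u t Ht Hu.
  pose proof (sumpos_CN N) as HC. pose proof (sumpos_D0 N) as HD. pose proof (sumpos_qN N) as HQ.
  pose proof (qN_le N) as HqA. pose proof (AA_ge1 N) as HA.
  set (z := RtoC t * u).
  set (s := Cmod z).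
  assert (Hs : s = (t * Cmod u)%R).
  { unfold s, z. rewrite Cmod_mult, Cmod_R, Rabs_pos_eq by lra. reflexivity. }
  assert (Hs0 : (0 <= s)%R) by apply Cmod_ge_0.
  assert (Hden : (0 < 1 + CN N + AA N * D0 N)%R) by nra.
  assert (Hsr' : (s <= rr N)%R) by (rewrite Hs; pose proof (Cmod_ge_0 u); nra).
  assert (Hrr1 : (rr N <= 1)%R).
  { unfold rr. apply Rle_div_l. lra. nra. }
  assert (Hs1 : (s <= 1)%R) by lra.
  assert (Hsr : ((CN N + AA N * D0 N) * s < 1)%R).
  { unfold rr in Hsr'. apply (Rmult_le_compat_l (1 + CN N + AA N * D0 N)) in Hsr'; [|lra].
    replace ((1 + CN N + AA N * D0 N) * (1 / (1 + CN N + AA N * D0 N)))%R with 1%R in Hsr' by (field; lra).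
    nra. }
  assert (HP : (Cmod (Pz N z) <= D0 N * s)%R) by (apply CP_bound; exact Hs1).
  assert (HDs : (D0 N * s < 1)%R) by nra.
  assert (HWm : (1 - D0 N * s <= Cmod (RtoC 1 - Pz N z))%R).
  { pose proof (Cmod_triangle (RtoC 1 - Pz N z) (Pz N z)) as Ht3.
    replace (RtoC 1 - Pz N z + Pz N z) with (RtoC 1) in Ht3 by ring.
    rewrite Cmod_1 in Ht3. lra. }
  assert (HRe : (0 < Re (Wf N u t))%R).
  { unfold Wf. change (CP fc N (RtoC t * u)) with (Pz N z).
    assert (Hr : (Re (Pz N z) <= Cmod (Pz N z))%R) by (eapply Rle_trans; [apply Rle_abs|apply re_le_Cmod]).
    unfold Cminus, Cplus, Copp, Re in *; simpl. lra. }
  split; [exact HRe|].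
  assert (HW0 : RtoC 1 - Pz N z <> RtoC 0).
  { intros E. rewrite E, Cmod_0 in HWm. lra. }
  assert (E : Dv N u t = u * (dPz N z - (1 - Pz N z) * dGz N z) / (RtoC 1 - Pz N z)).
  { unfold Dv, Wf. rewrite dPz_eq, dGz_eq. change (CP fc N (RtoC t * u)) with (Pz N z). fold z.
    field. exact HW0. }
  rewrite E. rewrite Cmod_div by exact HW0. rewrite Cmod_mult.
  assert (He : (Cmod (dPz N z - (1 - Pz N z) * dGz N z) <= qN N * s ^ N + CN N * s ^ S N)%R).
  { pose proof (ealg N z Hs1) as H0. fold s in H0.
    pose proof (Cmod_triangle (dPz N z - (1 - Pz N z) * dGz N z - RtoC (qN N) * Cpow z N) (RtoC (qN N) * Cpow z N)) as H3.
    replace (dPz N z - (1 - Pz N z) * dGz N z - RtoC (qN N) * Cpow z N + RtoC (qN N) * Cpow z N)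
      with (dPz N z - (1 - Pz N z) * dGz N z) in H3 by ring.
    rewrite Cmod_mult, Cmod_R, Cmod_pow, Rabs_pos_eq in H3 by exact HQ. fold s in H3. lra. }
  apply Rle_div_l. lra.
  assert (Hpow : (Cmod u ^ S N * t ^ N = Cmod u * s ^ N)%R).
  { rewrite Hs, Rpow_mult_distr. simpl. ring. }
  replace (AA N * Cmod u ^ S N * t ^ N)%R with (AA N * (Cmod u * s ^ N))%R by (rewrite <- Hpow; ring).
  assert (HsN : (0 <= s ^ N)%R) by (apply pow_le; lra).
  assert (Hk : (qN N * s ^ N + CN N * s ^ S N <= AA N * s ^ N * (1 - D0 N * s))%R).
  { simpl. assert (qN N + CN N * s <= AA N * (1 - D0 N * s))%R by nra. nra. }
  assert (Hk2 : (Cmod (dPz N z - (1 - Pz N z) * dGz N z) <= AA N * s ^ N * Cmod (RtoC 1 - Pz N z))%R).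
  { eapply Rle_trans. exact He. eapply Rle_trans. exact Hk. apply Rmult_le_compat_l. nra. exact HWm. }
  pose proof (Cmod_ge_0 u).
  apply (Rmult_le_compat_l (Cmod u)) in Hk2; [|lra]. eapply Rle_trans; [exact Hk2|right; ring].
Qed.

Lemma CP_zero : forall c N u, CP c N (RtoC 0 * u) = RtoC 0.
Proof.
  intros. unfold CP. rewrite (Csum_ext _ (fun _ => RtoC 0)).
  - exact (sum_n_m_const_zero (G:=C_AbelianMonoid) 1 N).
  - intros n Hn. rewrite Cpow_mult_l, <- RtoC_pow, pow_i by lia. ring.
Qed.

Lemma F_at0 : forall N u, F1 N u 0 = 0%R /\ F2 N u 0 = 0%R.
Proof.
  intros. unfold F1, F2, Wf. rewrite !CP_zero. unfold Cminus, Cplus, Copp, Re, Im; simpl.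
  replace ((1 + - 0) * ((1 + - 0) * 1) + (0 + - 0) * ((0 + - 0) * 1))%R with 1%R by ring. rewrite ln_1.
  replace ((0 + - 0) / (1 + - 0))%R with 0%R by field. rewrite atan_0. split; field.
Qed.

Lemma main_bound : forall N u, (Cmod u <= rr N)%R ->
  (Cmod (F1 N u 1, F2 N u 1) <= AA N * Cmod u ^ S N / INR (S N))%R.
Proof.
  intros N u Hu.
  set (h := (F1 N u 1, F2 N u 1) : C).
  set (m := Cmod h).
  assert (Hm0 : (0 <= m)%R) by apply Cmod_ge_0.
  assert (HSN : (0 < INR (S N))%R) by (apply lt_0_INR; lia).
  set (K := (AA N * Cmod u ^ S N)%R).
  assert (HK : (0 <= K)%R).
  { unfold K. pose proof (AA_ge1 N). apply Rmult_le_pos. lra. apply pow_le, Cmod_ge_0. }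
  destruct (Req_dec m 0) as [Hm|Hm].
  { rewrite Hm. apply Rle_div_r; [lra|]. lra. }
  assert (Hmp : (0 < m)%R) by lra.
  set (v1 := (fst h / m)%R). set (v2 := (snd h / m)%R).
  assert (Hm2 : (m ^ 2 = fst h ^ 2 + snd h ^ 2)%R) by (unfold m; apply Cmod2_alt).
  assert (Hv : (v1 ^ 2 + v2 ^ 2 = 1)%R).
  { unfold v1, v2. field_simplify; [|lra]. rewrite <- Hm2. field. lra. }
  set (chi := fun t => (v1 * F1 N u t + v2 * F2 N u t - K / INR (S N) * t ^ S N)%R).
  set (dchi := fun t => (v1 * Re (Dv N u t) + v2 * Im (Dv N u t) - K / INR (S N) * (INR (S N) * 1 * t ^ N))%R).
  assert (Hd : forall t, (0 <= t <= 1)%R -> is_derive chi t (dchi t) /\ (dchi t <= 0)%R).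
  { intros t Ht. destruct (Dv_bound N u t Ht Hu) as [HRe HB].
    destruct (dF N u t HRe) as [H1 H2]. split.
    - unfold chi, dchi. apply d_minus. apply d_plus; apply d_scal; assumption.
      apply d_scal. eapply is_derive_eq. apply is_derive_pow. apply is_derive_id.
      simpl pred. reflexivity.
    - unfold dchi.
      assert (Hc : (v1 * Re (Dv N u t) + v2 * Im (Dv N u t) <= Cmod (Dv N u t))%R).
      { pose proof (re_le_Cmod ((v1, (- v2)%R) * Dv N u t)) as Hr.
        rewrite Cmod_mult in Hr.
        assert (Hw : Cmod (v1, (- v2)%R) = 1%R).
        { unfold Cmod; cbn [fst snd]. replace (v1 ^ 2 + (- v2) ^ 2)%R with 1%R by (rewrite <- Hv; ring). apply sqrt_1. }
        rewrite Hw, Rmult_1_l in Hr.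
        destruct (Dv N u t) as [d1 d2]. unfold Cmult, Re, Im in *; simpl in *.
        pose proof (Rle_abs (v1 * d1 - - v2 * d2)%R). 
        replace (v1 * d1 + v2 * d2)%R with (v1 * d1 - - v2 * d2)%R by ring. lra. }
      replace (K / INR (S N) * (INR (S N) * 1 * t ^ N))%R with (K * t ^ N)%R by (field; lra).
      unfold K. lra. }
  assert (Hcont : forall t, (0 <= t <= 1)%R -> continuity_pt chi t).
  { intros t Ht. apply continuity_pt_filterlim.
    apply (ex_derive_continuous (K:=R_AbsRing) (V:=R_NormedModule)).
    exists (dchi t). apply Hd; exact Ht. }
  destruct (MVT_gen chi 0 1 dchi) as [c [Hc Hmvt]].
  - rewrite Rmin_left, Rmax_right by lra. intros t Ht. apply Hd. lra.
  - rewrite Rmin_left, Rmax_right by lra. intros t Ht. apply Hcont. lra.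
  - rewrite Rmin_left, Rmax_right in Hc by lra.
    destruct (Hd c Hc) as [_ Hneg].
    destruct (F_at0 N u) as [E1 E2].
    unfold chi in Hmvt. rewrite E1, E2 in Hmvt.
    assert (Hpsi1 : (v1 * F1 N u 1 + v2 * F2 N u 1 = m)%R).
    { unfold v1, v2, h; cbn [fst snd]. unfold h in Hm2; cbn [fst snd] in Hm2. field_simplify; [|lra].
      rewrite <- Hm2. field. lra. }
    rewrite Hpsi1 in Hmvt. rewrite pow1, pow_i in Hmvt by lia.
    apply Rle_div_r; [lra|].
    assert (m - K / INR (S N) <= 0)%R.
    { assert (m - K / INR (S N) * 1 - (v1 * 0 + v2 * 0 - K / INR (S N) * 0) = dchi c * (1 - 0))%R by exact Hmvt.
      nra. }
    assert (Hmk : (m <= K / INR (S N))%R) by lra.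
    apply (proj2 (Rle_div_r m K (INR (S N)) HSN)) in Hmk. unfold K in Hmk. exact Hmk.
Qed.

Open Scope R_scope.

Lemma Carg_pos : forall z : C, 0 < Re z -> Carg z = atan (Im z / Re z).
Proof.
  intros z Hz.
  assert (Hm : 0 < Cmod z).
  { pose proof (re_le_Cmod z). pose proof (Rle_abs (Re z)). lra. }
  assert (Hm2 : Cmod z ^ 2 = Re z ^ 2 + Im z ^ 2) by apply Cmod2_alt.
  assert (Hc : 0 < Re z / Cmod z) by (apply Rdiv_lt_0_compat; lra).
  assert (Hk : acos (Re z / Cmod z) = atan (Rabs (Im z) / Re z)).
  { rewrite acos_atan by exact Hc. f_equal.
    replace (1 - (Re z / Cmod z)²) with ((Im z / Cmod z)²).
    2:{ unfold Rsqr. field_simplify; try lra. rewrite Hm2. field. nra. }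
    rewrite sqrt_Rsqr_abs. unfold Rdiv. rewrite Rabs_mult, Rabs_inv, (Rabs_pos_eq (Cmod z)) by lra.
    field. split; lra. }
  unfold Carg. destruct (Rle_dec 0 (Im z)) as [H|H].
  - rewrite Hk, Rabs_pos_eq by exact H. reflexivity.
  - rewrite Hk, Rabs_left by lra. unfold Rdiv. rewrite Ropp_mult_distr_l_reverse, atan_opp. ring.
Qed.

Lemma ln_sqrt' : forall x, 0 < x -> ln (sqrt x) = ln x / 2.
Proof.
  intros x Hx. assert (Hs : 0 < sqrt x) by (apply sqrt_lt_R0; lra).
  rewrite <- (sqrt_sqrt x) at 2 by lra. rewrite ln_mult by lra. field.
Qed.

Lemma Clog_inv : forall W : C, 0 < Re W ->
  Clog (Cinv W) = ((- ln (Re W ^ 2 + Im W ^ 2) / 2)%R, (- atan (Im W / Re W))%R).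
Proof.
  intros W HW.
  assert (Hs : 0 < Re W ^ 2 + Im W ^ 2) by nra.
  assert (HW0 : W <> RtoC 0).
  { intros E. rewrite E in HW. simpl in HW. lra. }
  unfold Clog. f_equal.
  - rewrite Cmod_inv by exact HW0. rewrite ln_Rinv by (apply Cmod_gt_0; exact HW0).
    unfold Cmod. rewrite ln_sqrt' by (unfold Re, Im in Hs; lra). unfold Re, Im. field.
  - rewrite Carg_pos.
    + unfold Cinv, Re, Im; cbn [fst snd]. unfold Re, Im in Hs, HW.
      replace (- snd W / (fst W ^ 2 + snd W ^ 2) / (fst W / (fst W ^ 2 + snd W ^ 2)))
        with (- (snd W / fst W)) by (field; split; lra).
      apply atan_opp.
    + unfold Cinv, Re; cbn [fst snd]. unfold Re, Im in Hs, HW. apply Rdiv_lt_0_compat; assumption.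
Qed.

Open Scope R_scope.
Open Scope C_scope.

Theorem proposition5p5 :
  forall N : nat, exists dN : R, 0 < dN /\
    forall x : C, dN <= Cmod x ->
      exists theta : C, Cmod theta <= 1 /\
        Clog (Cinv (RtoC 1 - sum_n_m (fun n => RtoC (INR (fact n)) / Cpow x n) 1 N)) =
        sum_n_m (fun n => RtoC (INR (a n) / INR n) / Cpow x n) 1 N
        + theta * RtoC (INR (a (S N)) / INR (S N)) / Cpow x (S N).
Proof.
  intros N.
  pose proof (sumpos_CN N) as HC. pose proof (sumpos_D0 N) as HD. pose proof (AA_ge1 N) as HA.
  assert (Hrr : (0 < rr N)%R).
  { unfold rr. apply Rdiv_lt_0_compat. lra. nra. }
  exists (1 / rr N)%R. split. { apply Rdiv_lt_0_compat; lra. }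
  intros x Hx.
  assert (Hx0 : (0 < Cmod x)%R).
  { assert (0 < 1 / rr N)%R by (apply Rdiv_lt_0_compat; lra). lra. }
  assert (Hxn : x <> RtoC 0).
  { intros E. rewrite E, Cmod_0 in Hx0. lra. }
  set (u := / x).
  assert (Hu : Cmod u = (/ Cmod x)%R) by (apply Cmod_inv; exact Hxn).
  assert (Hur : (Cmod u <= rr N)%R).
  { rewrite Hu. apply Rle_div_l in Hx; [|lra].
    replace (/ Cmod x)%R with (1 / Cmod x)%R by (unfold Rdiv; ring).
    apply Rle_div_l. lra. lra. }
  assert (Hs1 : sum_n_m (fun n => RtoC (INR (fact n)) / Cpow x n) 1 N = CP fc N u).
  { unfold CP, fc. apply Csum_ext. intros n Hn. unfold Cdiv, u. rewrite Cpow_inv by exact Hxn. reflexivity. }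
  assert (Hs2 : sum_n_m (fun n => RtoC (INR (a n) / INR n) / Cpow x n) 1 N = CP gc N u).
  { unfold CP, gc. apply Csum_ext. intros n Hn. unfold Cdiv, u. rewrite Cpow_inv by exact Hxn. reflexivity. }
  destruct (Dv_bound N u 1 ltac:(lra) Hur) as [HRe _].
  assert (HW : Wf N u 1 = RtoC 1 - CP fc N u).
  { unfold Wf. rewrite Cmult_1_l. reflexivity. }
  set (h := (F1 N u 1, F2 N u 1) : C).
  assert (Hlog : Clog (Cinv (RtoC 1 - CP fc N u)) = h + CP gc N u).
  { rewrite <- HW. rewrite Clog_inv by exact HRe. unfold h, F1, F2.
    rewrite Cmult_1_l. unfold Cplus; cbn [fst snd]. unfold Re, Im. f_equal; ring. }
  rewrite Hs1, Hs2, Hlog.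
  assert (HA' : (0 < INR (a (S N)) / INR (S N))%R).
  { apply Rdiv_lt_0_compat. unfold AA in HA. lra. apply lt_0_INR. lia. }
  assert (HA0 : RtoC (INR (a (S N)) / INR (S N)) <> RtoC 0).
  { intros E. apply RtoC_inj in E. lra. }
  assert (Hpx : Cpow x (S N) <> RtoC 0) by (apply Cpow_nz; exact Hxn).
  exists (h * Cpow x (S N) / RtoC (INR (a (S N)) / INR (S N))).
  split.
  - rewrite Cmod_div by exact HA0. rewrite Cmod_mult, Cmod_pow, Cmod_R, Rabs_pos_eq by lra.
    pose proof (main_bound N u Hur) as Hb. fold h in Hb. unfold AA in Hb.
    apply Rle_div_l. lra.
    assert (Hux : (Cmod u ^ S N * Cmod x ^ S N = 1)%R).
    { rewrite <- Rpow_mult_distr, Hu, Rinv_l by lra. apply pow1. }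
    assert (Hxp : (0 <= Cmod x ^ S N)%R) by (apply pow_le; lra).
    apply (Rmult_le_compat_r (Cmod x ^ S N)) in Hb; [|exact Hxp].
    eapply Rle_trans. exact Hb. right. unfold Rdiv.
    replace (INR (a (S N)) * Cmod u ^ S N * / INR (S N) * Cmod x ^ S N)%R
      with (INR (a (S N)) * / INR (S N) * (Cmod u ^ S N * Cmod x ^ S N))%R by ring.
    rewrite Hux. ring.
  - field. split; assumption.
Qed.
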